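(* With $W=C^0_+\oplus E_0\oplus C^0_-$ and $\mathcal{T}=E+iC^0$, one has (1) $W=\{x\in E:\ e^{zh}x\in\mathcal{T}\text{ for all }z\in\mathcal{S}_\pi\}$; (2) $\overline W=\{x\in E:\ e^{zh}x\in E+iC\text{ for all }z\in\mathcal{S}_\pi\}$, where $e^{zh}$ denotes the complex linear extension to $E_\mathbb{C}$ and $\mathcal{S}_\pi=\{z\in\mathbb{C}:0<\operatorname{Im}z<\pi\}$.
   Context: $E$ finite-dimensional real vector space; $h\in\mathrm{End}(E)$ diagonalizable with eigenvalues in $\{-1,0,1\}$, $E_j=\ker(h-j)$; $\tau=e^{\pi ih}$; $C$ pointed generating closed convex cone invariant under $e^{\mathbb{R}h}$ and under $-\tau$, interior $C^0$; $C_\pm=\pm C\cap E_{\pm1}$ with interiors $C_\pm^0$ relative to $E_{\pm1}$. *)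

(* Defs.v *)
From HB Require Import structures.
From mathcomp Require Import all_boot all_order all_algebra.
From mathcomp Require Import all_classical all_reals all_analysis.
Set Implicit Arguments. Unset Strict Implicit. Unset Printing Implicit Defensive.
Import Order.TTheory GRing.Theory Num.Theory.
Import numFieldNormedType.Exports.
Local Open Scope classical_set_scope.
Local Open Scope ring_scope.

(* E = 'rV[R]_n (row vectors); an endomorphism h of E is a
   matrix acting on the right: x |-> x *m h.  The complexification
   E_C = E + iE is represented by pairs (re, im) : 'rV_n * 'rV_n. *)

Section Defs.
Variables (R : realType) (n : nat).
Local Notation E := 'rV[R]_n.

Definition Eig (h : 'M[R]_n) (j : R) : set E := [set x | x *m h = j *: x].

(* h is diagonalizable with eigenvalues in {-1,0,1}:
   E = E_{-1} + E_0 + E_1 (the sum is automatically direct). *)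
Definition diag_spec101 (h : 'M[R]_n) : Prop :=
  forall x : E, exists xm x0 xp,
    Eig h (-1) xm /\ Eig h 0 x0 /\ Eig h 1 xp /\ x = xm + x0 + xp.

(* Spectral projections onto E_j along the other eigenspaces (Lagrange
   interpolation; valid as h^3 = h under diag_spec101). *)

Definition projp (h : 'M[R]_n) : 'M[R]_n := 2%:R^-1 *: (h *m h + h).
Definition projn (h : 'M[R]_n) : 'M[R]_n := 2%:R^-1 *: (h *m h - h).
Definition proj0 (h : 'M[R]_n) : 'M[R]_n := 1%:M - h *m h.

(* Complex-linear extension of e^{zh} to E_C, z = a + i b:
   e^{zh} = sum_j e^{z j} P_j, with e^{zj} = e^{ja} (cos (jb) + i sin (jb)). *)
Definition expzh (h : 'M[R]_n) (a b : R) (w : E * E) : E * E :=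
  let P j := if j == 1 then projp h else if j == -1 then projn h else proj0 h in
  let c j := expR (j * a) * cos (j * b) in
  let s j := expR (j * a) * sin (j * b) in
  let term j := (c j *: (w.1 *m P j) - s j *: (w.2 *m P j),
                 s j *: (w.1 *m P j) + c j *: (w.2 *m P j)) in
  ((term (-1)).1 + (term 0).1 + (term 1).1,
   (term (-1)).2 + (term 0).2 + (term 1).2).

(* e^{th} on E (t real) and tau = e^{pi i h} on E (both are real operators:
   the imaginary part of the complexified operator applied to real x is 0). *)
Definition expth (h : 'M[R]_n) (t : R) (x : E) : E := (expzh h t 0 (x, 0)).1.
Definition tau (h : 'M[R]_n) (x : E) : E := (expzh h 0 pi (x, 0)).1.

Definition convex_cone (C : set E) : Prop :=
  C 0 /\ (forall x y, C x -> C y -> C (x + y)) /\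
  (forall (l : R) x, 0 <= l -> C x -> C (l *: x)).
Definition pointed (C : set E) : Prop := forall x, C x -> C (- x) -> x = 0.
Definition generating (C : set E) : Prop :=
  forall x : E, exists y z, C y /\ C z /\ x = y - z.

Definition rel_interior (S A : set E) : set E :=
  [set x | A x /\ exists e : R, 0 < e /\ forall y, ball x e y -> S y -> A y].

Definition Cplus (h : 'M[R]_n) (C : set E) : set E := C `&` Eig h 1.
Definition Cminus (h : 'M[R]_n) (C : set E) : set E := [set x | C (- x)] `&` Eig h (-1).

Definition Wset (h : 'M[R]_n) (C : set E) : set E :=
  [set x | exists xp x0 xm, rel_interior (Eig h 1) (Cplus h C) xp /\ Eig h 0 x0 /\
     rel_interior (Eig h (-1)) (Cminus h C) xm /\ x = xp + x0 + xm].

Definition strip (a b : R) : Prop := 0 < b < pi.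

End Defs.

(* Main.v *)
Set Warnings "-all".
Require Import Defs.
From HB Require Import structures.
From mathcomp Require Import all_boot all_order all_algebra.
From mathcomp Require Import all_classical all_reals all_analysis.
From mathcomp Require Import ring lra.
Import Order.TTheory GRing.Theory Num.Theory.
Import numFieldNormedType.Exports.
Local Open Scope classical_set_scope.
Local Open Scope ring_scope.
Section Alg.
Variables (R : realType) (n : nat) (h : 'M[R]_n).
Local Notation E := 'rV[R]_n.

Lemma eig_hh {j : R} {x : E} : Eig h j x -> x *m (h *m h) = (j * j) *: x.
Proof. by rewrite /Eig /= => H; rewrite mulmxA H -scalemxAl H scalerA. Qed.

Lemma half_double (x : E) : 2%:R^-1 *: (x + x) = x.
Proof. by rewrite -[x in x + x]scale1r -scalerDl scalerA mulVf ?scale1r // pnatr_eq0. Qed.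

Section P.
Variables (xm x0 xp : E).
Hypotheses (Hm : Eig h (-1) xm) (H0 : Eig h 0 x0) (Hp : Eig h 1 xp).

Lemma Pp : (xm + x0 + xp) *m projp h = xp.
Proof.
rewrite /projp -scalemxAr !mulmxDl !mulmxDr (eig_hh Hm) (eig_hh H0) (eig_hh Hp) Hm H0 Hp.
rewrite !scale0r !mulr0 !scale0r !mulrNN !mul1r !scale1r !scaleN1r.
by rewrite ?addr0 ?add0r subrr add0r half_double.
Qed.
Lemma Pn : (xm + x0 + xp) *m projn h = xm.
Proof.
rewrite /projn -scalemxAr !mulmxDl mulmxBr mulmxBr mulmxBr (eig_hh Hm) (eig_hh H0) (eig_hh Hp) Hm H0 Hp.
rewrite !scale0r !mulr0 !scale0r !mulrNN !mul1r !scale1r !scaleN1r.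
by rewrite ?subr0 ?add0r ?addr0 ?opprK subrr addr0 half_double.
Qed.
Lemma P0 : (xm + x0 + xp) *m proj0 h = x0.
Proof.
rewrite /proj0 !mulmxDl !mulmxBr !mulmx1 (eig_hh Hm) (eig_hh H0) (eig_hh Hp) .
rewrite !mulr0 !scale0r !mulrNN !mul1r !scale1r subr0 !subrr addr0 add0r //.
Qed.

Lemma neqs : [/\ ((-1:R) == 1) = false, ((0:R) == 1) = false & ((0:R) == -1) = false].
Proof. by split; apply/negbTE/eqP; lra. Qed.

Lemma expzh_eig a b : expzh h a b (xm + x0 + xp, 0) =
 ((expR (-a) * cos b) *: xm + x0 + (expR a * cos b) *: xp,
  (expR a * sin b) *: xp - (expR (-a) * sin b) *: xm).
Proof.
have [e1 e2 e3] := neqs.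
rewrite /expzh /= eqxx e1 e2 e3 !mul0mx !scaler0 !subr0 !addr0 eqxx Pp Pn P0.
rewrite !mulN1r !mul1r !mul0r expR0 cos0 sin0 cosN sinN !mul1r scale0r scale1r addr0.
by rewrite mulrN scaleNr (addrC (- _)).
Qed.
End P.
End Alg.
Section Top.
Variables (R : realType) (n : nat).
Local Notation E := 'rV[R]_n.

Lemma ballE (x y : E) (e : R) : ball x e y <-> `|x - y| < e.
Proof. by rewrite -ball_normE. Qed.

Lemma intP (A : set E) x :
  interior A x <-> exists2 e : R, 0 < e & forall y, `|x - y| < e -> A y.
Proof.
rewrite /interior; split => [/nbhs_ballP [e e0 H] | [e e0 H]].
  by exists e => // y Hy; apply: H; apply/ballE.
by apply/nbhs_ballP; exists e => // y /ballE; apply: H.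
Qed.

Lemma closP (A : set E) x :
  closure A x <-> forall e : R, 0 < e -> exists y, A y /\ `|x - y| < e.
Proof.
split => [H e e0 | H B /nbhs_ballP [e e0 He]].
  have [y [Ay By]] := H _ (nbhsx_ballx x e e0).
  by exists y; split => //; apply/ballE.
by have [y [Ay Hy]] := H e e0; exists y; split => //; apply: He; apply/ballE.
Qed.

Lemma entry_le (y : E) i j : `|y i j| <= `|y|.
Proof.
have -> : `|y| = mx_norm y by [].
rewrite mx_normrE.
exact: (le_bigmax _ (fun ij : 'I_1 * 'I_n => `|y ij.1 ij.2|) (i, j)).
Qed.

Lemma mx_lip (M : 'M[R]_n) : exists2 K : R, 0 <= K & forall y : E, `|y *m M| <= K * `|y|.
Proof.
exists (\sum_k \sum_j `|M k j|); first by apply: sumr_ge0 => k _; apply: sumr_ge0.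
move=> y.
have -> : `|y *m M| = mx_norm (y *m M) by [].
rewrite mx_normrE; apply: bigmax_le; first by apply: mulr_ge0 => //; apply: sumr_ge0 => k _; apply: sumr_ge0.
move=> [i j] _ /=; rewrite mxE.
apply: (le_trans (ler_norm_sum _ _ _)).
rewrite mulr_suml; apply: ler_sum => k _.
rewrite normrM mulrC; apply: ler_pM => //.
  by rewrite (bigD1 j) //= lerDl; apply: sumr_ge0.
exact: entry_le.
Qed.
End Top.

Lemma exp_sq (R : realType) (s : R) : 0 < s -> exists t, expR t * expR t = s.
Proof.
move=> s0; exists (ln s / 2); rewrite -expRD.
have -> : ln s / 2 + ln s / 2 = ln s by field.
by rewrite lnK // posrE.
Qed.

Lemma expN_sq (R : realType) (s : R) : 0 < s -> exists t, expR (- t) * expR (- t) = s.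
Proof. by move=> /exp_sq [t Ht]; exists (- t); rewrite opprK. Qed.

Lemma alg1 (R : realType) (u v X Y : R) : v * u = 1 -> v * (u * X - v * Y) = X + v * v * (- Y).
Proof. by move=> e; rewrite mulrBr mulrA e mul1r; ring. Qed.

Lemma alg2 (R : realType) (u v X Y : R) : u * v = 1 -> u * (u * X - v * Y) = - Y + u * u * X.
Proof. by move=> e; rewrite mulrBr (mulrA u v) e mul1r; ring. Qed.

Lemma small_lt (R : realType) (K e : R) : 0 <= K -> 0 < e -> K * (e / (K + 1)) < e.
Proof.
move=> K0 e0; have K1 : 0 < K + 1 by lra.
rewrite mulrA ltr_pdivrMr //; nra.
Qed.

Section Main.
Variables (R : realType) (n : nat) (h : 'M[R]_n) (C : set 'rV[R]_n).
Local Notation E := 'rV[R]_n.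
Hypotheses (Hd : diag_spec101 h) (Hc : convex_cone C) (Hcl : closed C)
  (Hg : generating C) (Hexp : forall t x, C x -> C (expth h t x))
  (Htau : forall x, C x -> C (- tau h x)).

Definition Int (x : E) := exists2 e : R, 0 < e & forall y, `|x - y| < e -> C y.
Definition RI (S : set E) (x : E) :=
  [/\ C x, S x & exists2 e : R, 0 < e & forall y, `|x - y| < e -> S y -> C y].

Lemma C0 : C 0. Proof. by case: Hc. Qed.
Lemma CD {x y} : C x -> C y -> C (x + y). Proof. by case: Hc => _ [H _]; apply: H. Qed.
Lemma CZ {l : R} {x} : 0 <= l -> C x -> C (l *: x). Proof. by case: Hc => _ [_ H]; apply: H. Qed.

Lemma EigD {j} {x y : E} : Eig h j x -> Eig h j y -> Eig h j (x + y).
Proof. by rewrite /Eig /= => Hx Hy; rewrite mulmxDl Hx Hy scalerDr. Qed.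
Lemma EigZ {j l} {x : E} : Eig h j x -> Eig h j (l *: x).
Proof. by rewrite /Eig /= => Hx; rewrite -scalemxAl Hx !scalerA mulrC. Qed.
Lemma EigN {j} {x : E} : Eig h j x -> Eig h j (- x).
Proof. by move=> Hx; rewrite -scaleN1r; apply: EigZ. Qed.
Lemma Eig0 j : Eig h j 0.
Proof. by rewrite /Eig /= mul0mx scaler0. Qed.

Lemma Int_C {x} : Int x -> C x.
Proof. by case=> e e0 H; apply: H; rewrite subrr normr0. Qed.

Lemma Int_scale {x} {l : R} : Int x -> 0 < l -> Int (l *: x).
Proof.
move=> [e e0 H] l0; exists (l * e); first exact: mulr_gt0.
move=> y Hy; have -> : y = l *: (l^-1 *: y) by rewrite scalerA divff ?scale1r // gt_eqF.
apply: CZ; first exact: ltW.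
apply: H; have -> : x - l^-1 *: y = l^-1 *: (l *: x - y).
  by rewrite scalerBr scalerA mulVf ?scale1r // gt_eqF.
rewrite normrZ gtr0_norm ?invr_gt0 // mulrC ltr_pdivrMr //.
by rewrite mulrC.
Qed.

Lemma Int_add {x w} : Int x -> C w -> Int (x + w).
Proof.
move=> [e e0 H] Cw; exists e => // y Hy.
have -> : y = (y - w) + w by rewrite subrK.
apply: CD => //; apply: H.
by have -> : x - (y - w) = x + w - y by apply/rowP => k; rewrite !mxE; ring.
Qed.

Lemma RI_scale {j x} {l : R} : RI (Eig h j) x -> 0 < l -> RI (Eig h j) (l *: x).
Proof.
move=> [Cx Ex [e e0 H]] l0; split; [by apply: CZ => //; apply: ltW | exact: EigZ |].
exists (l * e); first exact: mulr_gt0.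
move=> y Hy Ey; have -> : y = l *: (l^-1 *: y) by rewrite scalerA divff ?scale1r // gt_eqF.
apply: CZ; first exact: ltW.
apply: H; last exact: EigZ.
have -> : x - l^-1 *: y = l^-1 *: (l *: x - y).
  by rewrite scalerBr scalerA mulVf ?scale1r // gt_eqF.
rewrite normrZ gtr0_norm ?invr_gt0 // mulrC ltr_pdivrMr //.
by rewrite mulrC.
Qed.

Lemma RI_add {j p w} : RI (Eig h j) p -> C w -> Eig h j w -> RI (Eig h j) (p + w).
Proof.
move=> [Cp Ep [e e0 H]] Cw Ew; split; [exact: CD | exact: EigD |].
exists e => // y Hy Ey.
have -> : y = (y - w) + w by rewrite subrK.
apply: CD => //; apply: H; last by apply: EigD => //; apply: EigN.
by have -> : p - (y - w) = p + w - y by apply/rowP => k; rewrite !mxE; ring.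
Qed.

Lemma lim y q : (forall s : R, 0 < s -> C (y + s *: q)) -> C y.
Proof.
move=> H; rewrite ((closure_id C).1 Hcl); apply/closP => e e0.
have D0 : 0 < `|q| + 1 by rewrite ltr_pwDr.
exists (y + (e / (`|q| + 1)) *: q); split; first by apply: H; rewrite divr_gt0.
have -> : y - (y + (e / (`|q| + 1)) *: q) = - ((e / (`|q| + 1)) *: q).
  by rewrite opprD addrA subrr add0r.
rewrite normrN normrZ gtr0_norm ?divr_gt0 // mulrAC ltr_pdivrMr //.
by rewrite ltr_pM2l // ltrDl.
Qed.

Lemma expth_eig t xm x0 xp : Eig h (-1) xm -> Eig h 0 x0 -> Eig h 1 xp ->
  expth h t (xm + x0 + xp) = expR (- t) *: xm + x0 + expR t *: xp.
Proof. by move=> Hm H0 Hp; rewrite /expth expzh_eig //= cos0 !mulr1. Qed.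

Lemma tau_eig xm x0 xp : Eig h (-1) xm -> Eig h 0 x0 -> Eig h 1 xp ->
  tau h (xm + x0 + xp) = - xm + x0 - xp.
Proof.
by move=> Hm H0 Hp; rewrite /tau expzh_eig //= oppr0 expR0 cospi mul1r !scaleN1r.
Qed.

Lemma int_ne : exists c, Int c.
Proof.
have hf : forall i : 'I_n, {yz : E * E | [/\ C yz.1, C yz.2 & 'e_i = yz.1 - yz.2]}.
  move=> i; apply: cid; have [y [z [Cy [Cz e]]]] := Hg 'e_i; by exists (y, z).
pose f i := sval (hf i).
exists (\sum_i ((f i).1 + (f i).2)); exists 1 => // y Hy.
set s := \sum_i _ in Hy *.
pose u := y - s.
have -> : y = \sum_i ((1 + u 0 i) *: (f i).1 + (1 - u 0 i) *: (f i).2).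
  rewrite {1}(_ : y = s + u); last by rewrite /u addrC subrK.
  rewrite {1}(row_sum_delta u) /s -big_split /=; apply: eq_bigr => i _.
  have [_ _ ->] := svalP (hf i); rewrite -/(f i).
  by apply/rowP => k; rewrite !mxE; ring.
apply: (big_ind C) => //; first exact: C0; first by move=> a b; apply: CD.
move=> i _.
have : `|u 0 i| < 1.
  apply: le_lt_trans (@entry_le _ _ u 0 i) _; by rewrite /u distrC.
rewrite ltr_norml => /andP[h1 h2].
by apply: CD; apply: CZ; [lra | case: (svalP (hf i)) | lra | case: (svalP (hf i))].
Qed.

Lemma L0 : exists vm vp, [/\ Eig h (-1) vm, Eig h 1 vp & Int (vm + vp)].
Proof.
have [c Ic] := int_ne.
have [cm [c0 [cp [Em [E0 [Ep Hc']]]]]] := Hd c.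
have Ct := Htau _ (Int_C Ic).
have := Int_add Ic Ct.
rewrite Hc' tau_eig // => I2.
exists (cm + cm), (cp + cp); split; [exact: EigD | exact: EigD |].
have -> : cm + cm + (cp + cp) = cm + c0 + cp + - (- cm + c0 - cp).
  by apply/rowP => k; rewrite !mxE; ring.
exact: I2.
Qed.

Lemma L1 {p q} : Eig h 1 p -> Eig h (-1) q -> Int (p + q) ->
  RI (Eig h 1) p /\ RI (Eig h (-1)) q.
Proof.
move=> Ep Eq [r r0 Hr].
have key1 : forall y, `|p - y| < r -> Eig h 1 y -> C y.
  move=> y Hy Ey; apply: (@lim y q) => s s0.
  have Cyq : C (q + 0 + y).
    apply: Hr; have -> : p + q - (q + 0 + y) = p - y by apply/rowP => k; rewrite !mxE; ring.
    exact: Hy.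
  have [t Ht] := @expN_sq _ _ s0.
  have := CZ (ltW (expR_gt0 (- t))) (Hexp t _ Cyq).
  rewrite expth_eig //; last exact: Eig0.
  have e1 : expR (- t) * expR t = 1 by rewrite -expRD addNr expR0.
  have -> : expR (- t) *: (expR (- t) *: q + 0 + expR t *: y) = y + s *: q.
    by rewrite -Ht; apply/rowP => k; rewrite !mxE mulrDr mulrA e1; ring.
  done.
have key2 : forall y, `|q - y| < r -> Eig h (-1) y -> C y.
  move=> y Hy Ey; apply: (@lim y p) => s s0.
  have Cyq : C (y + 0 + p).
    apply: Hr; have -> : p + q - (y + 0 + p) = q - y by apply/rowP => k; rewrite !mxE; ring.
    exact: Hy.
  have [t Ht] := @exp_sq _ _ s0.
  have := CZ (ltW (expR_gt0 t)) (Hexp t _ Cyq).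
  rewrite expth_eig //; last exact: Eig0.
  have e1 : expR t * expR (- t) = 1 by rewrite -expRD subrr expR0.
  have -> : expR t *: (expR (- t) *: y + 0 + expR t *: p) = y + s *: p.
    by rewrite -Ht; apply/rowP => k; rewrite !mxE mulrDr mulrDr mulrA e1; ring.
  done.
split; split => //.
- by apply: key1 => //; rewrite subrr normr0.
- by exists r.
- by apply: key2 => //; rewrite subrr normr0.
- by exists r.
Qed.

Lemma L2 {p q} : RI (Eig h 1) p -> RI (Eig h (-1)) q -> Int (p + q).
Proof.
move=> [Cp Ep [e1 e10 H1]] [Cq Eq [e2 e20 H2]].
have [vm [vp [Em Ep' Iv]]] := L0.
pose M := Num.min e1 e2. pose D := `|vp| + `|vm| + 1. pose eps := M / D.
have M0 : 0 < M by rewrite lt_min e10 e20.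
have D0 : 0 < D by rewrite /D ltr_pwDr // addr_ge0.
have eps0 : 0 < eps by rewrite divr_gt0.
have epsD : eps * D = M by rewrite /eps divfK // gt_eqF.
have C1 : C (p - eps *: vp).
  apply: H1; last by apply: EigD => //; apply: EigN; apply: EigZ.
  rewrite opprD addrA subrr add0r opprK normrZ gtr0_norm //.
  apply: (@lt_le_trans _ _ (eps * D)); first by rewrite ltr_pM2l // /D; have := normr_ge0 vm; lra.
  by rewrite epsD /M ge_min lexx.
have C2 : C (q - eps *: vm).
  apply: H2; last by apply: EigD => //; apply: EigN; apply: EigZ.
  rewrite opprD addrA subrr add0r opprK normrZ gtr0_norm //.
  apply: (@lt_le_trans _ _ (eps * D)); first by rewrite ltr_pM2l // /D; have := normr_ge0 vp; lra.
  by rewrite epsD /M ge_min lexx orbT.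
have := Int_add (Int_scale Iv eps0) (CD C1 C2).
have -> : eps *: (vm + vp) + (p - eps *: vp + (q - eps *: vm)) = p + q.
  by apply/rowP => k; rewrite !mxE; ring.
done.
Qed.

Lemma RIp x : rel_interior (Eig h 1) (Cplus h C) x <-> RI (Eig h 1) x.
Proof.
split.
  move=> [[Cx Ex] [e [e0 H]]]; split => //; exists e => // y Hy Ey.
  by have [] := H y (proj2 (@ballE _ _ _ _ _) Hy) Ey.
move=> [Cx Ex [e e0 H]]; split => //; exists e; split => // y /ballE Hy Ey.
by split => //; apply: H.
Qed.

Lemma RIm x : rel_interior (Eig h (-1)) (Cminus h C) x <-> RI (Eig h (-1)) (- x).
Proof.
split.
  move=> [[Cx Ex] [e [e0 H]]]; split => //; first exact: EigN.
  exists e => // y Hy Ey.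
  have [] := H (- y) _ (EigN Ey); first by apply/ballE; rewrite (_ : x - - y = - (- x - y)) ?normrN //; apply/rowP => k; rewrite !mxE; ring.
  move=> Cy _; have E1 : (- - y : E) = y by apply/rowP => k; rewrite !mxE opprK.
  by rewrite -E1.
move=> [Cx Ex [e e0 H]]; split; first by split => //; rewrite -(opprK x); apply: EigN.
exists e; split => // y /ballE Hy Ey.
split => //; apply: H; last exact: EigN.
by rewrite (_ : - x - - y = - (x - y)) ?normrN //; apply/rowP => k; rewrite !mxE; ring.
Qed.

Lemma part1 : Wset h C = [set x | forall a b, strip a b -> interior C (expzh h a b (x, 0)).2].
Proof.
rewrite eqEsubset; split => x.
- move=> [xp [x0 [xm [Rp [E0 [Rm ->]]]]]] a b Hs.
  have sb := sin_gt0_pi Hs.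
  have Ep : Eig h 1 xp by case: (proj1 (RIp xp) Rp).
  have Em : Eig h (-1) xm.
    by case: (proj1 (RIm xm) Rm) => _ /EigN; rewrite opprK.
  have -> : xp + x0 + xm = xm + x0 + xp by apply/rowP => k; rewrite !mxE; ring.
  rewrite expzh_eig //= -scalerN.
  apply/intP; apply: L2; apply: RI_scale.
  + exact/RIp.
  + by apply: mulr_gt0 => //; apply: expR_gt0.
  + exact/RIm.
  + by apply: mulr_gt0 => //; apply: expR_gt0.
- move=> H; have [xm [x0 [xp [Em [E0 [Ep Hx]]]]]] := Hd x; subst x.
  have Hs : strip 0 (pi / 2 : R) by have := @pi_gt0 R; rewrite /strip => p0; apply/andP; split; lra.
  have := H 0 (pi / 2) Hs. rewrite expzh_eig //= oppr0 expR0 sin_pihalf !mul1r !scale1r.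
  move=> /intP I1.
  have [R1 R2] := L1 Ep (EigN Em) I1.
  exists xp, x0, xm; split; first exact/RIp. split => //; split; first exact/RIm.
  by apply/rowP => k; rewrite !mxE; ring.
Qed.

Lemma Im_lin a b : exists M, forall y, (expzh h a b (y, 0)).2 = y *m M.
Proof.
exists ((expR a * sin b) *: projp h - (expR (- a) * sin b) *: projn h) => y.
have [ym [y0 [yp [Em [E0 [Ep ->]]]]]] := Hd y.
by rewrite expzh_eig // mulmxBr -(scalemxAr (expR a * sin b)) -(scalemxAr (expR (- a) * sin b)) Pp // Pn.
Qed.

Lemma part2 : closure (Wset h C) = [set x | forall a b, strip a b -> C (expzh h a b (x, 0)).2].
Proof.
rewrite eqEsubset; split => x.
- move=> /closP Hx a b Hs.
  have [M HM] := Im_lin a b.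
  have [K K0 HK] := @mx_lip _ _ M.
  rewrite ((closure_id C).1 Hcl); apply/closP => e e0.
  have K1 : 0 < K + 1 by rewrite ltr_pwDr.
  have [w [Ww Hw]] := Hx (e / (K + 1)) (divr_gt0 e0 K1).
  exists (expzh h a b (w, 0)).2; split.
    by rewrite part1 in Ww; apply: interior_subset; apply: Ww.
  rewrite !HM -mulmxBl; apply: le_lt_trans (HK _) _.
  apply: (le_lt_trans _ (@small_lt _ _ _ K0 e0)).
  by rewrite ler_wpM2l // ltW.
- move=> H; have [xm [x0 [xp [Em [E0 [Ep Hx]]]]]] := Hd x; subst x.
  have Hs : strip 0 (pi / 2 : R) by have := @pi_gt0 R; rewrite /strip => p0; apply/andP; split; lra.
  have Hb : forall a, C (expR a *: xp - expR (- a) *: xm).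
    move=> a; have := H a (pi / 2) Hs.
    by rewrite expzh_eig //= sin_pihalf !mulr1.
  have Cxp : C xp.
    apply: (@lim xp (- xm)) => s s0.
    have [t Ht] := @expN_sq _ _ s0.
    have := CZ (ltW (expR_gt0 (- t))) (Hb t).
    have e1 : expR (- t) * expR t = 1 by rewrite -expRD addNr expR0.
    have -> : expR (- t) *: (expR t *: xp - expR (- t) *: xm) = xp + s *: - xm.
      by rewrite -Ht; apply/rowP => k; rewrite !mxE alg1.
    done.
  have Cxm : C (- xm).
    apply: (@lim (- xm) xp) => s s0.
    have [t Ht] := @exp_sq _ _ s0.
    have := CZ (ltW (expR_gt0 t)) (Hb t).
    have e1 : expR t * expR (- t) = 1 by rewrite -expRD subrr expR0.
    have -> : expR t *: (expR t *: xp - expR (- t) *: xm) = - xm + s *: xp.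
      by rewrite -Ht; apply/rowP => k; rewrite !mxE alg2.
    done.
  apply/closP => e e0.
  have [vm [vp [Evm Evp Iv]]] := L0.
  have [Rvp Rvm] := L1 Evp Evm (eq_ind _ Int Iv _ (addrC vm vp)).
  pose D := `|vp - vm| + 1.
  have D0 : 0 < D by rewrite ltr_pwDr.
  pose eps := e / D.
  have eps0 : 0 < eps by rewrite divr_gt0.
  exists ((eps *: vp + xp) + x0 + - (eps *: vm + - xm)); split.
    exists (eps *: vp + xp), x0, (- (eps *: vm + - xm)); split.
      by apply/RIp; apply: RI_add => //; apply: RI_scale.
    split => //; split => //; apply/RIm; rewrite opprK; apply: RI_add => //; first exact: RI_scale.
    exact: EigN.
  have -> : xm + x0 + xp - (eps *: vp + xp + x0 + - (eps *: vm + - xm)) = - (eps *: (vp - vm)).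
    by apply/rowP => k; rewrite !mxE; ring.
  rewrite normrN normrZ gtr0_norm // /eps mulrAC ltr_pdivrMr //.
  by rewrite ltr_pM2l // /D ltrDl.
Qed.

End Main.

Theorem lemma3p3 (R : realType) (n : nat) (h : 'M[R]_n) (C : set 'rV[R]_n) :
  diag_spec101 h ->
  convex_cone C -> closed C -> pointed C -> generating C ->
  (forall t x, C x -> C (expth h t x)) ->
  (forall x, C x -> C (- tau h x)) ->
  (Wset h C = [set x | forall a b, strip a b -> interior C (expzh h a b (x, 0)).2])
  /\
  (closure (Wset h C) = [set x | forall a b, strip a b -> C (expzh h a b (x, 0)).2]).
Proof.
move=> Hd Hc Hcl _ Hg He Ht; split.
- exact: (@part1 R n h C Hd Hc Hcl Hg He Ht).
- exact: (@part2 R n h C Hd Hc Hcl Hg He Ht).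
Qed.
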